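(* Let $p,q$ be relatively prime positive integers and let $P_0,P_1$ be relatively prime positive integers with $\min\{P_0,P_1\}\ge 2pq$. Then there exists a unital injective $*$-homomorphism from $I(p,q)$ into $I(P_0,P_1)$.
   Context: For relatively prime positive integers $p,q$, the dimension drop algebra $I(p,q)$ is $\{f\in C([0,1])\otimes M_{pq}: f(0)\in M_p\otimes 1_q,\ f(1)\in 1_p\otimes M_q\}$ (equivalently, functions on two copies of $[0,2\pi]$ glued at $0$, with these conditions at the two free endpoints). *)

(* Defs.v *)
From HB Require Import structures.
From mathcomp Require Import all_boot all_order all_algebra.
From mathcomp Require Import all_classical reals topology normedtype.
From mathcomp Require Import complex mxtens.
Set Implicit Arguments. Unset Strict Implicit. Unset Printing Implicit Defensive.
Import Order.TTheory GRing.Theory Num.Theory.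
Import numFieldNormedType.Exports.
Local Open Scope ring_scope.
Local Open Scope classical_set_scope.

Definition clamp01 (R : realType) (t : R) : R := Num.min 1 (Num.max 0 t).

Definition mx_continuous (R : realType) (n : nat) (f : R -> 'M[R[i]]_n) : Prop :=
  forall i j : 'I_n,
    continuous (fun t : R => Re (f t i j)) /\ continuous (fun t : R => Im (f t i j)).

(* Dimension drop algebra I(p,q), realized as functions R -> M_{pq}(C)
   that are the constant extension of their restriction to [0,1]
   (f t = f (clamp01 t)); these are in bijection with C([0,1], M_{pq}). *)
Definition dimdrop (R : realType) (p q : nat) : set (R -> 'M[R[i]]_(p * q)) :=
  [set f | (forall t, f t = f (clamp01 t))
         /\ mx_continuous f
         /\ (exists a : 'M[R[i]]_p, f 0 = a *t (1%:M : 'M[R[i]]_q))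
         /\ (exists b : 'M[R[i]]_q, f 1 = (1%:M : 'M[R[i]]_p) *t b)].

Arguments dimdrop {R} p q _.

Definition adjf (R : realType) (n : nat) (f : R -> 'M[R[i]]_n) : R -> 'M[R[i]]_n :=
  fun t => map_mx (@conjc R) (f t)^T.

Definition unital_inj_star_hom (R : realType) (p q P0 P1 : nat)
  (phi : (R -> 'M[R[i]]_(p * q)) -> (R -> 'M[R[i]]_(P0 * P1))) : Prop :=
  (forall f, dimdrop p q f -> dimdrop P0 P1 (phi f)) /\
      (forall f g, dimdrop p q f -> dimdrop p q g ->
         phi (fun t => f t + g t) = (fun t => phi f t + phi g t)) /\
      (forall (c : R[i]) f, dimdrop p q f ->
         phi (fun t => c *: f t) = (fun t => c *: phi f t)) /\
      (forall f g, dimdrop p q f -> dimdrop p q g ->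
         phi (fun t => f t *m g t) = (fun t => phi f t *m phi g t)) /\
      (forall f, dimdrop p q f -> phi (adjf f) = adjf (phi f)) /\
      phi (fun _ => 1%:M) = (fun _ => 1%:M) /\
    (forall f g, dimdrop p q f -> dimdrop p q g -> phi f = phi g -> f = g).

(* Main.v *)
Require Import Defs.
From HB Require Import structures.
From mathcomp Require Import all_boot all_order all_algebra.
From mathcomp Require Import all_classical reals topology normedtype.
From mathcomp Require Import complex mxtens trigo.
From mathcomp Require Import ring lra zify.
Set Implicit Arguments. Unset Strict Implicit. Unset Printing Implicit Defensive.
Import Order.TTheory GRing.Theory Num.Theory.
Import numFieldNormedType.Exports.
Local Open Scope ring_scope.

Section Adj.
Variable R : realType.
Local Notation C := (R[i]).

Definition adj {m n} (A : 'M[C]_(m,n)) : 'M[C]_(n,m) := map_mx (@conjc R) A^T.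

Lemma adjE m n (A : 'M[C]_(m,n)) i j : adj A i j = conjc (A j i).
Proof. by rewrite !mxE. Qed.

Lemma adjK m n (A : 'M[C]_(m,n)) : adj (adj A) = A.
Proof. by apply/matrixP=> i j; rewrite !adjE conjcK. Qed.

Lemma adjD m n (A B : 'M[C]_(m,n)) : adj (A + B) = adj A + adj B.
Proof. by apply/matrixP=> i j; rewrite !mxE rmorphD. Qed.

Lemma adjZ m n c (A : 'M[C]_(m,n)) : adj (c *: A) = conjc c *: adj A.
Proof. by apply/matrixP=> i j; rewrite !mxE rmorphM. Qed.

Lemma adjM m n k (A : 'M[C]_(m,n)) (B : 'M[C]_(n,k)) : adj (A *m B) = adj B *m adj A.
Proof. by rewrite /adj trmx_mul map_mxM. Qed.

Lemma adj1 n : adj (1%:M : 'M[C]_n) = 1%:M.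
Proof. by apply/matrixP=> i j; rewrite !mxE conjc_nat eq_sym. Qed.

Lemma adj0 m n : adj (0 : 'M[C]_(m,n)) = 0.
Proof. by apply/matrixP=> i j; rewrite !mxE conjc0. Qed.

Lemma adj_tens m n k l (A : 'M[C]_(m,n)) (B : 'M[C]_(k,l)) : adj (A *t B) = adj A *t adj B.
Proof. by rewrite /adj trmx_tens map_mxT. Qed.

Lemma adj_sum m n (I : finType) (F : I -> 'M[C]_(m,n)) : adj (\sum_i F i) = \sum_i adj (F i).
Proof. by apply: (big_morph _ (@adjD m n) (@adj0 m n)). Qed.

End Adj.

Section Tens.
Variable R : realType.
Local Notation C := (R[i]).

Lemma idx_inj m n : injective (@mxtens_index m n).
Proof. exact: can_inj (@mxtens_indexK m n). Qed.

Lemma tensmxDl m n k l (A B : 'M[C]_(m,n)) (D : 'M[C]_(k,l)) :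
  (A + B) *t D = A *t D + B *t D.
Proof. by apply/matrixP=> i j; rewrite !mxE mulrDl. Qed.

Lemma tensmxDr m n k l (A : 'M[C]_(m,n)) (B D : 'M[C]_(k,l)) :
  A *t (B + D) = A *t B + A *t D.
Proof. by apply/matrixP=> i j; rewrite !mxE mulrDr. Qed.

Lemma tensmxZl m n k l c (A : 'M[C]_(m,n)) (D : 'M[C]_(k,l)) :
  (c *: A) *t D = c *: (A *t D).
Proof. by apply/matrixP=> i j; rewrite !mxE mulrA. Qed.

Lemma tens_suml m n k l (I : finType) (F : I -> 'M[C]_(m,n)) (D : 'M[C]_(k,l)) :
  (\sum_i F i) *t D = \sum_i (F i *t D).
Proof.
apply: (big_morph (fun A => A *t D)) => [A B|]; first exact: tensmxDl.
exact: tens0mx.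
Qed.

Lemma tens_sumr m n k l (I : finType) (F : I -> 'M[C]_(k,l)) (D : 'M[C]_(m,n)) :
  D *t (\sum_i F i) = \sum_i (D *t F i).
Proof.
apply: (big_morph (fun A => D *t A)) => [A B|]; first exact: tensmxDr.
exact: tensmx0.
Qed.

Lemma tens_sum2 m n k l (I J : finType) (F : I -> 'M[C]_(m,n)) (G : J -> 'M[C]_(k,l)) :
  \sum_(x : I * J) (F x.1 *t G x.2) = (\sum_i F i) *t (\sum_j G j).
Proof.
rewrite tens_suml -(pair_bigA _ (fun i j => F i *t G j)) /=.
by apply: eq_bigr => i _; rewrite tens_sumr.
Qed.

Lemma tens11 m n : (1%:M : 'M[C]_m) *t (1%:M : 'M[C]_n) = 1%:M.
Proof.
apply/matrixP=> k l.
case: (mxtens_indexP k) => i j; case: (mxtens_indexP l) => i' j'.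
rewrite tensmxE !mxE -natrM (inj_eq (@idx_inj m n)) xpair_eqE.
by case: (i == i'); case: (j == j').
Qed.

Definition blk {N n} (E : 'M[C]_(N,n)) (X : 'M[C]_n) : 'M[C]_N := E *m X *m adj E.

Lemma blk_tens m m' n n' (A : 'M[C]_(m,n)) (B : 'M[C]_(m',n')) X Y :
  blk (A *t B) (X *t Y) = blk A X *t blk B Y.
Proof. by rewrite /blk adj_tens !tensmx_mul. Qed.

Definition swp m n : 'M[C]_(n * m, m * n) :=
  \matrix_(k, l) ((mxtens_unindex k) == ((mxtens_unindex l).2, (mxtens_unindex l).1))%:R.

Lemma swpE m n (i : 'I_m) (j : 'I_n) l :
  swp m n (mxtens_index (j, i)) l = (l == mxtens_index (i, j))%:R.
Proof.
case: (mxtens_indexP l) => a b.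
rewrite mxE !mxtens_indexK /= (inj_eq (@idx_inj m n)) !xpair_eqE andbC.
by rewrite ![_ == a]eq_sym ![_ == b]eq_sym.
Qed.

Lemma swpE' m n (i : 'I_m) (j : 'I_n) k :
  swp m n k (mxtens_index (i, j)) = (k == mxtens_index (j, i))%:R.
Proof.
case: (mxtens_indexP k) => a b.
by rewrite swpE (inj_eq (@idx_inj m n)) (inj_eq (@idx_inj n m)) !xpair_eqE andbC eq_sym [b == _]eq_sym.
Qed.

Lemma mul_swp m n k (M : 'M[C]_(m * n, k)) (i : 'I_m) (j : 'I_n) l :
  (swp m n *m M) (mxtens_index (j, i)) l = M (mxtens_index (i, j)) l.
Proof.
rewrite mxE (bigD1 (mxtens_index (i, j))) //= swpE eqxx mul1r big1 ?addr0 //.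
by move=> r /negbTE hr; rewrite swpE hr mul0r.
Qed.

Lemma mul_swp' m n k (M : 'M[C]_(k, n * m)) (i : 'I_m) (j : 'I_n) l :
  (M *m swp m n) l (mxtens_index (i, j)) = M l (mxtens_index (j, i)).
Proof.
rewrite mxE (bigD1 (mxtens_index (j, i))) //= swpE' eqxx mulr1 big1 ?addr0 //.
by move=> r /negbTE hr; rewrite swpE' hr mulr0.
Qed.

Lemma swp_tens m m' n n' (X : 'M[C]_(m, m')) (Y : 'M[C]_(n, n')) :
  swp m n *m (X *t Y) = (Y *t X) *m swp m' n'.
Proof.
apply/matrixP=> k l.
case: (mxtens_indexP k) => j i; case: (mxtens_indexP l) => a b.
by rewrite mul_swp mul_swp' !tensmxE mulrC.
Qed.

Lemma swp_unit m n : swp m n *m adj (swp m n) = 1%:M.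
Proof.
apply/matrixP=> k l.
case: (mxtens_indexP k) => j i.
rewrite mul_swp adjE.
case: (mxtens_indexP l) => a b.
rewrite swpE conjc_nat !mxE (inj_eq (@idx_inj n m)) (inj_eq (@idx_inj m n)).
by rewrite !xpair_eqE andbC.
Qed.

Lemma swp_unit' m n : adj (swp m n) *m swp m n = 1%:M.
Proof.
apply/matrixP=> k l.
case: (mxtens_indexP l) => i j.
rewrite mul_swp' adjE swpE conjc_nat !mxE.
by rewrite eq_sym.
Qed.

Lemma swp_conj m n (X : 'M[C]_m) (Y : 'M[C]_n) :
  swp m n *m (X *t Y) *m adj (swp m n) = Y *t X.
Proof. by rewrite swp_tens -mulmxA swp_unit mulmx1. Qed.

Lemma swp_sym n : adj (swp n n) = swp n n.
Proof.
apply/matrixP=> k l.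
case: (mxtens_indexP k) => i j.
rewrite adjE swpE' conjc_nat.
case: (mxtens_indexP l) => a b.
by rewrite swpE.
Qed.

End Tens.

Section Fam.
Variable R : realType.
Local Notation C := (R[i]).

Section F1.
Variables (N n : nat) (K : finType) (E : K -> 'M[C]_(N,n)).
Definition fam (X : 'M[C]_n) : 'M[C]_N := \sum_k blk (E k) X.
Hypothesis orth : forall k l, adj (E k) *m E l = if k == l then 1%:M else 0.

Lemma fam_mul X Y : fam X *m fam Y = fam (X *m Y).
Proof.
rewrite /fam mulmx_suml; apply: eq_bigr => k _.
rewrite mulmx_sumr (bigD1 k) //= big1 ?addr0.
  by rewrite /blk !mulmxA -[_ *m adj (E k) *m E k]mulmxA orth eqxx mulmx1 -!mulmxA.
move=> l /negbTE hl; rewrite /blk !mulmxA -[_ *m adj (E k) *m E l]mulmxA orth eq_sym hl.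
by rewrite mulmx0 !mul0mx.
Qed.

Lemma fam_extract k X : adj (E k) *m fam X *m E k = X.
Proof.
rewrite /fam mulmx_sumr mulmx_suml (bigD1 k) //= big1 ?addr0.
  by rewrite /blk !mulmxA orth eqxx mul1mx -mulmxA orth eqxx mulmx1.
move=> l /negbTE hl; rewrite /blk !mulmxA orth eq_sym hl mul0mx !mul0mx.
by [].
Qed.
End F1.

Lemma fam_add N n (K : finType) (E : K -> 'M[C]_(N,n)) X Y : fam E (X + Y) = fam E X + fam E Y.
Proof. by rewrite /fam -big_split; apply: eq_bigr=> k _; rewrite /blk mulmxDr mulmxDl. Qed.

Lemma fam_scale N n (K : finType) (E : K -> 'M[C]_(N,n)) c X : fam E (c *: X) = c *: fam E X.
Proof.
rewrite /fam scaler_sumr; apply: eq_bigr=> k _.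
by rewrite /blk scalemxAl -scalemxAr.
Qed.

Lemma fam_adj N n (K : finType) (E : K -> 'M[C]_(N,n)) X : adj (fam E X) = fam E (adj X).
Proof. by rewrite /fam adj_sum; apply: eq_bigr=> k _; rewrite /blk !adjM adjK mulmxA. Qed.

Lemma fam_cross N n n' (K K' : finType) (E : K -> 'M[C]_(N,n)) (E' : K' -> 'M[C]_(N,n'))
  (h : forall k l, adj (E k) *m E' l = 0) X Y : fam E X *m fam E' Y = 0.
Proof.
rewrite /fam mulmx_suml big1 // => k _; rewrite mulmx_sumr big1 // => l _.
by rewrite /blk !mulmxA -[_ *m adj (E k) *m E' l]mulmxA h mulmx0 !mul0mx.
Qed.

Lemma fam_cross_extract N n n' (K K' : finType) (E : K -> 'M[C]_(N,n)) (E' : K' -> 'M[C]_(N,n'))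
  (h : forall k l, adj (E k) *m E' l = 0) k Y : adj (E k) *m fam E' Y *m E k = 0.
Proof.
rewrite /fam mulmx_sumr mulmx_suml big1 // => l _.
by rewrite /blk !mulmxA h !mul0mx.
Qed.

Definition Jsel N n (off : nat) : 'M[C]_(N,n) := \matrix_(r, x) ((r : nat) == off + x)%N%:R.

Lemma Jiso N n off : (off + n <= N)%N -> adj (Jsel N n off) *m Jsel N n off = 1%:M.
Proof.
move=> h; apply/matrixP=> x y; rewrite !mxE.
have hx : (off + x < N)%N by rewrite (leq_trans _ h) // ltn_add2l.
rewrite (bigD1 (Ordinal hx)) //= big1 ?addr0.
  by rewrite !mxE /= eqxx conjc_nat eqn_add2l mul1r.
move=> r hr; rewrite !mxE; case: eqP => e; last by rewrite conjc0 mul0r.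
by exfalso; move/eqP: hr; apply; apply: val_inj.
Qed.

Lemma Jorth N n n' off off' : (off + n <= off')%N || (off' + n' <= off)%N ->
  adj (Jsel N n off) *m Jsel N n' off' = 0.
Proof.
move=> h; apply/matrixP=> x y; rewrite !mxE big1 // => r _; rewrite !mxE.
case: eqP => e1; last by rewrite conjc0 mul0r.
case: eqP => e2; last by rewrite mulr0.
exfalso; move: h; rewrite e1 in e2; case/orP => h.
  have : (off + x < off')%N by rewrite (leq_trans _ h) // ltn_add2l.
  by rewrite e2 ltnNge leq_addr.
have : (off' + y < off)%N by rewrite (leq_trans _ h) // ltn_add2l.
by rewrite -e2 ltnNge leq_addr.
Qed.

Lemma JJE N n off (r r' : 'I_N) :
  (Jsel N n off *m adj (Jsel N n off)) r r' = ((r == r') && (off <= r < off + n)%N)%:R.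
Proof.
rewrite mxE.
case: (boolP (off <= r < off + n)%N) => hr.
  case/andP: hr => h1 h2.
  have hx : (r - off < n)%N by rewrite ltn_subLR.
  rewrite (bigD1 (Ordinal hx)) //= big1 ?addr0.
    rewrite !mxE /= subnKC // eqxx conjc_nat mul1r andbT.
    by rewrite eq_sym.
  move=> x hx'; rewrite !mxE; case: eqP => e; last by rewrite mul0r.
  by exfalso; move/eqP: hx'; apply; apply: val_inj; rewrite /= e addKn.
rewrite andbF big1 // => x _; rewrite !mxE; case: eqP => e; last by rewrite mul0r.
by exfalso; move/negP: hr; apply; rewrite e leq_addr ltn_add2l ltn_ord.
Qed.

Lemma JJsum N n off u (r r' : 'I_N) :
  (\sum_(i < u) Jsel N n (off + i * n) *m adj (Jsel N n (off + i * n))) r r'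
  = ((r == r') && (off <= r < off + u * n)%N)%:R.
Proof.
rewrite summxE; elim: u => [|u IH].
  by rewrite big_ord0 mul0n addn0 ltnNge andbN andbF.
rewrite big_ord_recr /= IH JJE.
case: (r == r') => //=; last by rewrite addr0.
rewrite mulSnr addnA.
case: (leqP off r) => h1 /=; last first.
  by rewrite add0r (leqNgt (off + u * n)) (leq_trans h1) ?leq_addr.
case: (ltnP r (off + u * n)) => h2 /=.
  by rewrite addr0 ltn_addr.
by rewrite add0r.
Qed.

End Fam.

Section Cont.
Variable R : realType.
Local Notation C := (R[i]).

Definition ccont (g : R -> C) := continuous (fun t : R => (g t : (R[i] : numFieldType))).

Lemma ccont_cst c : ccont (fun _ => c).
Proof. by move=> x; apply: cst_continuous. Qed.

Lemma ccont_add g h : ccont g -> ccont h -> ccont (fun t => g t + h t).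
Proof. move=> hg hh x; apply: continuousD; [exact: hg|exact: hh]. Qed.

Lemma ccont_mul g h : ccont g -> ccont h -> ccont (fun t => g t * h t).
Proof. move=> hg hh x; apply: continuousM; [exact: hg|exact: hh]. Qed.

Lemma ccont_conj g : ccont g -> ccont (fun t => conjc (g t)).
Proof.
move=> hg x; apply/cvgrPdist_lt => e e0.
have /cvgrPdist_lt/(_ e e0) := hg x.
by apply: filterS => t; rewrite -rmorphB normcJ.
Qed.

Lemma ccont_real (r : R -> R) : continuous r -> ccont (fun t => (r t)%:C%C).
Proof.
move=> hr x; apply/cvgrPdist_lt => e e0.
have hIm : complex.Im e = 0 by apply: ger0_Im; apply: ltW.
have eE : e = (complex.Re e)%:C%C.
  by rewrite [LHS]complexE hIm mulr0 addr0.
have he : 0 < complex.Re e by move: e0; rewrite ltcE /= => /andP[].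
have /cvgrPdist_lt/(_ _ he) := hr x.
apply: filterS => t ht.
rewrite -rmorphB normc_def /= expr0n /= addr0 sqrtr_sqr [X in _ < X]eE ltcE /= eqxx. exact: ht.
Qed.

Lemma ccont_comp g (h : R -> R) : ccont g -> continuous h -> ccont (fun t => g (h t)).
Proof. by move=> hg hh x; apply: continuous_comp; [apply: hh | apply: hg]. Qed.

Lemma ccont_ext g h : (forall t, g t = h t) -> ccont g -> ccont h.
Proof. by move=> e; have -> : h = g by apply: funext => t; rewrite e. Qed.

Lemma ccont_sum_seq (I : Type) (s : seq I) (g : I -> R -> C) :
  (forall k, ccont (g k)) -> ccont (fun t => \sum_(k <- s) g k t).
Proof.
move=> hg; elim: s => [|k s IH].
  apply: (ccont_ext (g := fun _ => 0)); last exact: ccont_cst.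
  by move=> t; rewrite big_nil.
apply: (ccont_ext (g := fun t => g k t + \sum_(j <- s) g j t)).
  by move=> t; rewrite [in RHS]big_cons.
exact: (ccont_add (hg k) IH).
Qed.

Lemma ccont_sum (K : finType) (g : K -> R -> C) :
  (forall k, ccont (g k)) -> ccont (fun t => \sum_k g k t).
Proof. exact: ccont_sum_seq. Qed.

Definition mxc m n (F : R -> 'M[C]_(m,n)) := forall i j, ccont (fun t => F t i j).

Lemma mxc_cst m n (A : 'M[C]_(m,n)) : mxc (fun _ => A).
Proof. move=> i j; exact: ccont_cst. Qed.

Lemma mxc_add m n (F G : R -> 'M[C]_(m,n)) : mxc F -> mxc G -> mxc (fun t => F t + G t).
Proof.
move=> hF hG i j; apply: (ccont_ext (g := fun t => F t i j + G t i j)).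
  by move=> t; rewrite [in RHS]mxE.
exact: (ccont_add (hF i j) (hG i j)).
Qed.

Lemma mxc_mul m n k (F : R -> 'M[C]_(m,n)) (G : R -> 'M[C]_(n,k)) :
  mxc F -> mxc G -> mxc (fun t => F t *m G t).
Proof.
move=> hF hG i j; apply: (ccont_ext (g := fun t => \sum_l F t i l * G t l j)).
  by move=> t; rewrite [in RHS]mxE.
apply: ccont_sum => l; exact: (ccont_mul (hF i l) (hG l j)).
Qed.

Lemma mxc_adj m n (F : R -> 'M[C]_(m,n)) : mxc F -> mxc (fun t => adj (F t)).
Proof.
move=> hF i j; apply: (ccont_ext (g := fun t => conjc (F t j i))).
  by move=> t; rewrite [in RHS]adjE.
exact: (ccont_conj (hF j i)).
Qed.

Lemma mxc_comp m n (F : R -> 'M[C]_(m,n)) h : mxc F -> continuous h -> mxc (fun t => F (h t)).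
Proof. move=> hF hh i j; exact: (ccont_comp (hF i j) hh). Qed.

Lemma mxc_sum m n (K : finType) (F : K -> R -> 'M[C]_(m,n)) :
  (forall k, mxc (F k)) -> mxc (fun t => \sum_k F k t).
Proof.
move=> hF i j; apply: (ccont_ext (g := fun t => \sum_k F k t i j)).
  by move=> t; rewrite [in RHS]summxE.
apply: ccont_sum => k; exact: (hF k i j).
Qed.

Lemma mxc_scale m n (g : R -> C) (A : 'M[C]_(m,n)) : ccont g -> mxc (fun t => g t *: A).
Proof.
move=> hg i j; apply: (ccont_ext (g := fun t => g t * A i j)).
  by move=> t; rewrite [in RHS]mxE.
apply: (@ccont_mul g (fun _ => A i j)); [exact: hg | exact: ccont_cst].
Qed.

Lemma mxc_blk N n (E : 'M[C]_(N,n)) (F : R -> 'M[C]_n) : mxc F -> mxc (fun t => blk E (F t)).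
Proof.
move=> hF; rewrite /blk; apply: mxc_mul; last exact: mxc_cst.
by apply: mxc_mul => //; apply: mxc_cst.
Qed.

Lemma mxc_fam N n (K : finType) (E : K -> 'M[C]_(N,n)) (F : R -> 'M[C]_n) :
  mxc F -> mxc (fun t => fam E (F t)).
Proof. move=> hF; rewrite /fam; apply: mxc_sum => k; exact: mxc_blk. Qed.

End Cont.

Section Path.
Variable R : realType.
Local Notation C := (R[i]).
Local Notation swp := (swp R).

Lemma rcD (f g : R -> R) : continuous f -> continuous g -> continuous (fun t => f t + g t).
Proof. move=> hf hg x; apply: continuousD; [exact: hf|exact: hg]. Qed.
Lemma rcM (f g : R -> R) : continuous f -> continuous g -> continuous (fun t => f t * g t).
Proof. move=> hf hg x; apply: continuousM; [exact: hf|exact: hg]. Qed.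
Lemma rcC (c : R) : continuous (fun _ : R => c).
Proof. move=> x; exact: cst_continuous. Qed.

Definition hfun (t : R) : C := Complex ((cos (pi * t) - 1) / 2) (sin (pi * t) / 2).

Lemma hfun_key t : hfun t + conjc (hfun t) + 2 * (hfun t * conjc (hfun t)) = 0.
Proof.
rewrite /hfun /=.
have := cos2Dsin2 (pi * t).
set c := cos _; set s := sin _ => hcs.
simpc. apply/eqP; rewrite eq_complex /=; apply/andP; split; apply/eqP.
  nra.
ring.
Qed.


Lemma hfun0 : hfun 0 = 0.
Proof. by rewrite /hfun mulr0 cos0 sin0 subrr !mul0r. Qed.

Lemma hfun1 : hfun 1 = -1.
Proof.
rewrite /hfun mulr1 cospi sinpi mul0r.
apply/eqP; rewrite eq_complex /=; apply/andP; split; apply/eqP.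
  by field.
by rewrite oppr0.
Qed.

Lemma rc_id : continuous (fun x : R => x).
Proof. by move=> x; exact: cvg_id. Qed.

Lemma rc_cospi : continuous (fun t : R => (cos (pi * t) - 1) / 2).
Proof.
apply: rcM; last exact: rcC.
apply: rcD; last exact: rcC.
move=> x; apply: continuous_comp; first exact: mulrl_continuous.
exact: continuous_cos.
Qed.

Lemma rc_sinpi : continuous (fun t : R => sin (pi * t) / 2).
Proof.
apply: rcM; last exact: rcC.
move=> x; apply: continuous_comp; first exact: mulrl_continuous.
exact: continuous_sin.
Qed.

Lemma hfun_cont : ccont hfun.
Proof.
apply: (ccont_ext (g := fun t => ((cos (pi * t) - 1) / 2)%:C%C + 'i%C * (sin (pi * t) / 2)%:C%C)).
  move=> t; rewrite /hfun; apply/eqP; rewrite eq_complex /=; apply/andP; split; apply/eqP.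
    by ring.
  by ring.
apply: ccont_add; first exact: (ccont_real rc_cospi).
apply: ccont_mul; first exact: ccont_cst.
exact: (ccont_real rc_sinpi).
Qed.

Definition Qm n : 'M[C]_(n * n) := 1%:M - swp n n.
Definition Upath n (t : R) : 'M[C]_(n * n) := 1%:M + hfun t *: Qm n.

Lemma swp_sq n : swp n n *m swp n n = 1%:M.
Proof. by rewrite -{2}swp_sym swp_unit. Qed.

Lemma adjN m k (A : 'M[C]_(m,k)) : adj (- A) = - adj A.
Proof. by apply/matrixP=> i j; rewrite !mxE rmorphN. Qed.

Lemma Qm_adj n : adj (Qm n) = Qm n.
Proof. by rewrite /Qm adjD adj1 adjN swp_sym. Qed.

Lemma Qm_sq n : Qm n *m Qm n = 2 *: Qm n.
Proof.
rewrite /Qm mulmxBl !mulmxBr !mul1mx mulmx1 swp_sq scaler_nat mulr2n opprB [in LHS]addrC. by [].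
Qed.

Lemma Upath_adj n t : adj (Upath n t) = 1%:M + conjc (hfun t) *: Qm n.
Proof. by rewrite /Upath adjD adj1 adjZ Qm_adj. Qed.

Lemma U_gen n (Q : 'M[C]_n) (h h' : C) : Q *m Q = 2 *: Q -> h + h' + 2 * (h * h') = 0 ->
  (1%:M + h *: Q) *m (1%:M + h' *: Q) = 1%:M.
Proof.
move=> hQ hh.
rewrite mulmxDl !mulmxDr !mul1mx mulmx1 -scalemxAl -scalemxAr hQ !scalerA -addrA -!scalerDl.
have -> : h' + (h + h * h' * 2) = 0 by rewrite -hh; ring.
by rewrite scale0r addr0.
Qed.

Lemma Upath_unit n t : Upath n t *m adj (Upath n t) = 1%:M.
Proof. by rewrite Upath_adj; apply: U_gen; [exact: Qm_sq | exact: hfun_key]. Qed.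

Lemma Upath_unit' n t : adj (Upath n t) *m Upath n t = 1%:M.
Proof.
rewrite Upath_adj; apply: U_gen; first exact: Qm_sq.
by rewrite (addrC (conjc _)) (mulrC (conjc _)); exact: hfun_key.
Qed.

Lemma Upath0 n : Upath n 0 = 1%:M.
Proof. by rewrite /Upath hfun0 scale0r addr0. Qed.

Lemma Upath1 n : Upath n 1 = swp n n.
Proof. by rewrite /Upath hfun1 scaleN1r /Qm opprB addrC subrK. Qed.

Lemma Upath_cont n : mxc (Upath n).
Proof.
apply: mxc_add; first exact: mxc_cst.
apply: mxc_scale; exact: hfun_cont.
Qed.

End Path.

Local Close Scope ring_scope.

Lemma decomp p q N : (0 < p)%N -> (0 < q)%N -> coprime p q -> (2 * p * q <= N)%N ->
  exists u v, (0 < u)%N /\ N = (u * p + v * q)%N.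
Proof.
move=> hp hq cpq hN.
set x := chinese p q N 0 %% (p * q).
have hpq : (0 < p * q)%N by rewrite muln_gt0 hp hq.
have hxlt : (x < p * q)%N by rewrite ltn_pmod.
have hx1 : x = N %[mod p].
  by rewrite /x (@modn_dvdm (p * q)) ?dvdn_mulr // chinese_modl.
have hx2 : x %% q = 0%N.
  by rewrite /x (@modn_dvdm (p * q)) ?dvdn_mull // chinese_modr // mod0n.
have hxN : (x <= N)%N by apply: leq_trans (ltnW hxlt) _; apply: leq_trans hN; rewrite -mulnA leq_pmull.
have hdp : (p %| N - x)%N by rewrite -eqn_mod_dvd // hx1.
have hdq : (q %| x)%N by rewrite /dvdn hx2.
exists ((N - x) %/ p), (x %/ q); split.
  rewrite divn_gt0 //.
  have : (p <= p * q)%N by rewrite leq_pmulr.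
  move: hN hxlt; rewrite -mulnA; lia.
by rewrite divnK // divnK // subnK.
Qed.

Local Open Scope ring_scope.

Section Main.
Variable R : realType.
Local Notation C := (R[i]).
Local Notation swp := (swp R).
Local Notation Jsel := (Jsel R).

Lemma adj_orth_flip m n k (A : 'M[C]_(m,n)) (B : 'M[C]_(m,k)) :
  adj A *m B = 0 -> adj B *m A = 0.
Proof. by move=> h; rewrite -[A]adjK -adjM h adj0. Qed.

Lemma orth_tens m n m' n' (I J : finType) (A : I -> 'M[C]_(m,n)) (B : J -> 'M[C]_(m',n')) :
  (forall a b, adj (A a) *m A b = if a == b then 1%:M else 0) ->
  (forall a b, adj (B a) *m B b = if a == b then 1%:M else 0) ->
  forall k l : I * J, adj (A k.1 *t B k.2) *m (A l.1 *t B l.2) = if k == l then 1%:M else 0.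
Proof.
move=> hA hB [a b] [a' b']; rewrite adj_tens tensmx_mul hA hB /= xpair_eqE.
case: (a == a'); case: (b == b') => /=; by rewrite ?tens11 ?tens0mx ?tensmx0.
Qed.

Lemma cross_tens1 m n m' n' k k' (I J I' J' : finType) (A : I -> 'M[C]_(m,n)) (B : J -> 'M[C]_(m',n'))
  (A' : I' -> 'M[C]_(m,k)) (B' : J' -> 'M[C]_(m',k')) :
  (forall a b, adj (A a) *m A' b = 0) ->
  forall x y, adj (A x.1 *t B x.2) *m (A' y.1 *t B' y.2) = 0.
Proof. by move=> h x y; rewrite adj_tens tensmx_mul h tens0mx. Qed.

Lemma cross_tens2 m n m' n' k k' (I J I' J' : finType) (A : I -> 'M[C]_(m,n)) (B : J -> 'M[C]_(m',n'))
  (A' : I' -> 'M[C]_(m,k)) (B' : J' -> 'M[C]_(m',k')) :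
  (forall a b, adj (B a) *m B' b = 0) ->
  forall x y, adj (A x.1 *t B x.2) *m (A' y.1 *t B' y.2) = 0.
Proof. by move=> h x y; rewrite adj_tens tensmx_mul h tensmx0. Qed.

Lemma Jorth_fam N n u off : (off + u * n <= N)%N ->
  forall a b : 'I_u, adj (Jsel N n (off + a * n)) *m Jsel N n (off + b * n) = if a == b then 1%:M else 0.
Proof.
move=> h a b; case: eqP => [<-|/eqP hab].
  apply: Jiso; apply: leq_trans h; rewrite -addnA leq_add2l -mulSnr leq_mul2r ltn_ord orbT //.
apply: Jorth; case: (ltngtP a b) => hlt.
- apply/orP; left; rewrite -addnA leq_add2l -mulSnr leq_mul2r hlt orbT //.
- apply/orP; right; rewrite -addnA leq_add2l -mulSnr leq_mul2r hlt orbT //.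
- by move: hab; rewrite -val_eqE /= hlt eqxx.
Qed.

Lemma Jcross N n n' u v off : (off + u * n <= N)%N ->
  forall (a : 'I_u) (b : 'I_v), adj (Jsel N n (0 + a * n)) *m Jsel N n' (u * n + b * n') = 0.
Proof.
move=> h a b; apply: Jorth; apply/orP; left.
by rewrite add0n (leq_trans _ (leq_addr _ _)) // -mulSnr leq_mul2r ltn_ord orbT.
Qed.

Lemma fam_tens N N' n n' (I J : finType) (A : I -> 'M[C]_(N,n)) (B : J -> 'M[C]_(N',n'))
  (X : 'M[C]_n) (Y : 'M[C]_n') :
  fam (fun k : I * J => A k.1 *t B k.2) (X *t Y) = (\sum_i blk (A i) X) *t (\sum_j blk (B j) Y).
Proof. by rewrite /fam -tens_sum2; apply: eq_bigr => k _; rewrite blk_tens. Qed.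

Lemma fam_mulr N n n' (K : finType) (E : K -> 'M[C]_(N,n)) (S : 'M[C]_(n, n')) Y :
  fam (fun k => E k *m S) Y = fam E (S *m Y *m adj S).
Proof. by apply: eq_bigr => k _; rewrite /blk adjM !mulmxA. Qed.

Lemma sum4_mul N (X1 X2 X3 X4 Y1 Y2 Y3 Y4 : 'M[C]_N) :
  X1 *m Y2 = 0 -> X1 *m Y3 = 0 -> X1 *m Y4 = 0 ->
  X2 *m Y1 = 0 -> X2 *m Y3 = 0 -> X2 *m Y4 = 0 ->
  X3 *m Y1 = 0 -> X3 *m Y2 = 0 -> X3 *m Y4 = 0 ->
  X4 *m Y1 = 0 -> X4 *m Y2 = 0 -> X4 *m Y3 = 0 ->
  (X1 + X2 + X3 + X4) *m (Y1 + Y2 + Y3 + Y4) = X1 *m Y1 + X2 *m Y2 + X3 *m Y3 + X4 *m Y4.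
Proof.
move=> h12 h13 h14 h21 h23 h24 h31 h32 h34 h41 h42 h43.
rewrite !mulmxDl !mulmxDr h12 h13 h14 h21 h23 h24 h31 h32 h34 h41 h42 h43.
by rewrite !addr0 !add0r.
Qed.


Lemma conjU_mul n (U X Y : 'M[C]_n) : adj U *m U = 1%:M ->
  (U *m X *m adj U) *m (U *m Y *m adj U) = U *m (X *m Y) *m adj U.
Proof.
move=> h; rewrite !mulmxA -[U *m X *m adj U *m U]mulmxA h mulmx1.
by rewrite -!mulmxA.
Qed.

Lemma acr (V : zmodType) (a b c d : V) : a + b + c + d = a + c + (d + b).
Proof. by rewrite -!addrA; congr (_ + _); rewrite addrCA (addrC b d). Qed.

Lemma addACA4 (V : zmodType) (a1 a2 b1 b2 c1 c2 d1 d2 : V) :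
  (a1 + a2) + (b1 + b2) + (c1 + c2) + (d1 + d2) = (a1 + b1 + c1 + d1) + (a2 + b2 + c2 + d2).
Proof. by rewrite (addrACA a1) (addrACA (a1 + b1)) (addrACA (a1 + b1 + c1)). Qed.

Lemma tens4 m n m' n' (A B : 'M[C]_(m,n)) (A' B' : 'M[C]_(m',n')) :
  A *t B' + B *t A' + A *t A' + B *t B' = (A + B) *t (B' + A').
Proof. by rewrite tensmxDl !tensmxDr acr. Qed.

Lemma ccont_opp (g : R -> C) : ccont g -> ccont (fun t => - g t).
Proof.
move=> hg; apply: (ccont_ext (g := fun t => (-1) * g t)); first by move=> t; rewrite mulN1r.
apply: (ccont_mul (g := fun _ => -1) (h := g)); [exact: ccont_cst | exact: hg].
Qed.

Lemma mxc_of_cont n (f : R -> 'M[C]_n) : mx_continuous f -> mxc f.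
Proof.
move=> hf i j; have [hre him] := hf i j.
apply: (ccont_ext (g := fun t => 'Re (f t i j) + 'i * 'Im (f t i j))).
  by move=> t; rewrite -Crect.
apply: ccont_add; first exact: hre.
apply: (ccont_mul (g := fun _ => 'i) (h := fun t => 'Im (f t i j))); [exact: ccont_cst | exact: him].
Qed.

Lemma cont_of_mxc n (f : R -> 'M[C]_n) : mxc f -> mx_continuous f.
Proof.
move=> hf i j; split.
  apply: (ccont_ext (g := fun t => (f t i j + conjc (f t i j)) * 2^-1)).
    by move=> t; rewrite ReE.
  apply: (ccont_mul (h := fun _ => 2^-1)); [exact: (ccont_add (hf i j) (ccont_conj (hf i j))) | exact: ccont_cst].
apply: (ccont_ext (g := fun t => 'i * (conjc (f t i j) + - f t i j) * 2^-1)).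
  by move=> t; rewrite ImE.
apply: (ccont_mul (h := fun _ => 2^-1)); last exact: ccont_cst.
apply: (ccont_mul (g := fun _ => 'i)); first exact: ccont_cst.
exact: (ccont_add (ccont_conj (hf i j)) (ccont_opp (hf i j))).
Qed.

Lemma clamp_cont : continuous (@clamp01 R).
Proof.
move=> x; apply: (@continuous_min R R (fun _ => 1) (fun t => Num.max 0 t)).
  exact: cst_continuous.
apply: (@continuous_max R R (fun _ => 0) (fun t => t)).
  exact: cst_continuous.
exact: cvg_id.
Qed.

Lemma clamp_idem (t : R) : clamp01 (clamp01 t) = clamp01 t.
Proof.
rewrite /clamp01; set c := Num.min 1 (Num.max 0 t).
have h0 : 0 <= c by rewrite /c le_min ler01 le_max lexx.
have h1 : c <= 1 by rewrite /c ge_min lexx.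
by rewrite (max_r h0) (min_r h1).
Qed.

Lemma clamp0 : clamp01 (0 : R) = 0.
Proof. by rewrite /clamp01 maxxx (min_r ler01). Qed.
Lemma clamp1 : clamp01 (1 : R) = 1.
Proof. by rewrite /clamp01 (max_r ler01) minxx. Qed.

Lemma rc_1m : continuous (fun s : R => 1 - s).
Proof. move=> x; apply: continuousB; [exact: cst_continuous | exact: cvg_id]. Qed.

Section Constr.
Variables (p q P0 P1 u v w z : nat).
Hypotheses (hp : (0 < p)%N) (hq : (0 < q)%N) (hu : (0 < u)%N) (hw : (0 < w)%N).
Hypotheses (e0 : P0 = (u * p + v * q)%N) (e1 : P1 = (w * q + z * p)%N).

Definition JA0 (i : 'I_u) := Jsel P0 p (0 + i * p).
Definition JB0 (j : 'I_v) := Jsel P0 q (u * p + j * q).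
Definition JB1 (i : 'I_w) := Jsel P1 q (0 + i * q).
Definition JA1 (j : 'I_z) := Jsel P1 p (w * q + j * p).

Definition EAB (k : 'I_u * 'I_w) := JA0 k.1 *t JB1 k.2.
Definition EBA' (k : 'I_v * 'I_z) := JB0 k.1 *t JA1 k.2.
Definition EBA (k : 'I_v * 'I_z) := EBA' k *m swp p q.
Definition EAA (k : 'I_u * 'I_z) := JA0 k.1 *t JA1 k.2.
Definition EBB (k : 'I_v * 'I_w) := JB0 k.1 *t JB1 k.2.

Let hA0 : (0 + u * p <= P0)%N. Proof. by rewrite e0 leq_addr. Qed.
Let hB0 : (u * p + v * q <= P0)%N. Proof. by rewrite e0. Qed.
Let hB1 : (0 + w * q <= P1)%N. Proof. by rewrite e1 leq_addr. Qed.
Let hA1 : (w * q + z * p <= P1)%N. Proof. by rewrite e1. Qed.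

Let oA0 := Jorth_fam hA0.
Let oB0 := Jorth_fam hB0.
Let oB1 := Jorth_fam hB1.
Let oA1 := Jorth_fam hA1.
Let cA0B0 : forall a b, adj (JA0 a) *m JB0 b = 0 := @Jcross P0 p q u v 0 hA0.
Let cB1A1 : forall a b, adj (JB1 a) *m JA1 b = 0 := @Jcross P1 q p w z 0 hB1.
Let cB0A0 : forall a b, adj (JB0 a) *m JA0 b = 0.
Proof. by move=> a b; apply: adj_orth_flip; apply: cA0B0. Qed.
Let cA1B1 : forall a b, adj (JA1 a) *m JB1 b = 0.
Proof. by move=> a b; apply: adj_orth_flip; apply: cB1A1. Qed.

Lemma oAB k l : adj (EAB k) *m EAB l = if k == l then 1%:M else 0.
Proof. exact: (orth_tens oA0 oB1). Qed.
Lemma oBA' k l : adj (EBA' k) *m EBA' l = if k == l then 1%:M else 0.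
Proof. exact: (orth_tens oB0 oA1). Qed.
Lemma oAA k l : adj (EAA k) *m EAA l = if k == l then 1%:M else 0.
Proof. exact: (orth_tens oA0 oA1). Qed.
Lemma oBB k l : adj (EBB k) *m EBB l = if k == l then 1%:M else 0.
Proof. exact: (orth_tens oB0 oB1). Qed.
Lemma oBA k l : adj (EBA k) *m EBA l = if k == l then 1%:M else 0.
Proof.
rewrite /EBA adjM !mulmxA -[adj _ *m adj _ *m EBA' l]mulmxA oBA'.
by case: (k == l); rewrite ?mulmx1 ?swp_unit' // mulmx0 mul0mx.
Qed.

Lemma x12 k l : adj (EAB k) *m EBA' l = 0. Proof. exact: (cross_tens1 _ _ cA0B0). Qed.
Lemma x13 k l : adj (EAB k) *m EAA l = 0. Proof. exact: (cross_tens2 _ _ cB1A1). Qed.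
Lemma x14 k l : adj (EAB k) *m EBB l = 0. Proof. exact: (cross_tens1 _ _ cA0B0). Qed.
Lemma x21 k l : adj (EBA' k) *m EAB l = 0. Proof. exact: (cross_tens1 _ _ cB0A0). Qed.
Lemma x23 k l : adj (EBA' k) *m EAA l = 0. Proof. exact: (cross_tens1 _ _ cB0A0). Qed.
Lemma x24 k l : adj (EBA' k) *m EBB l = 0. Proof. exact: (cross_tens2 _ _ cA1B1). Qed.
Lemma x31 k l : adj (EAA k) *m EAB l = 0. Proof. exact: (cross_tens2 _ _ cA1B1). Qed.
Lemma x32 k l : adj (EAA k) *m EBA' l = 0. Proof. exact: (cross_tens1 _ _ cA0B0). Qed.
Lemma x34 k l : adj (EAA k) *m EBB l = 0. Proof. exact: (cross_tens1 _ _ cA0B0). Qed.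
Lemma x41 k l : adj (EBB k) *m EAB l = 0. Proof. exact: (cross_tens1 _ _ cB0A0). Qed.
Lemma x42 k l : adj (EBB k) *m EBA' l = 0. Proof. exact: (cross_tens2 _ _ cB1A1). Qed.
Lemma x43 k l : adj (EBB k) *m EAA l = 0. Proof. exact: (cross_tens1 _ _ cB0A0). Qed.

Lemma xS1 N (E : 'M[C]_(P0 * P1, N)) (k : 'I_v * 'I_z) : adj (EBA' k) *m E = 0 -> adj (EBA k) *m E = 0.
Proof. by move=> h; rewrite /EBA adjM -mulmxA h mulmx0. Qed.
Lemma xS2 N (E : 'M[C]_(P0 * P1, N)) (k : 'I_v * 'I_z) : adj E *m EBA' k = 0 -> adj E *m EBA k = 0.
Proof. by move=> h; rewrite /EBA mulmxA h mul0mx. Qed.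


Definition zq : 'I_q := Ordinal hq.
Definition zp : 'I_p := Ordinal hp.
Definition am (M : 'M[C]_(p * q)) : 'M[C]_p :=
  \matrix_(i, j) M (mxtens_index (i, zq)) (mxtens_index (j, zq)).
Definition bm (M : 'M[C]_(p * q)) : 'M[C]_q :=
  \matrix_(i, j) M (mxtens_index (zp, i)) (mxtens_index (zp, j)).

Lemma am_tens X : am (X *t 1%:M) = X.
Proof. by apply/matrixP=> i j; rewrite mxE tensmxE mxE eqxx mulr1. Qed.
Lemma bm_tens Y : bm (1%:M *t Y) = Y.
Proof. by apply/matrixP=> i j; rewrite mxE tensmxE mxE eqxx mul1r. Qed.
Lemma amD M N : am (M + N) = am M + am N.
Proof. by apply/matrixP=> i j; rewrite !mxE. Qed.
Lemma bmD M N : bm (M + N) = bm M + bm N.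
Proof. by apply/matrixP=> i j; rewrite !mxE. Qed.
Lemma amZ c M : am (c *: M) = c *: am M.
Proof. by apply/matrixP=> i j; rewrite !mxE. Qed.
Lemma bmZ c M : bm (c *: M) = c *: bm M.
Proof. by apply/matrixP=> i j; rewrite !mxE. Qed.
Lemma am_adj M : am (adj M) = adj (am M).
Proof. by apply/matrixP=> i j; rewrite !mxE. Qed.
Lemma bm_adj M : bm (adj M) = adj (bm M).
Proof. by apply/matrixP=> i j; rewrite !mxE. Qed.
Lemma am1 : am 1%:M = 1%:M.
Proof. by rewrite -tens11 am_tens. Qed.
Lemma bm1 : bm 1%:M = 1%:M.
Proof. by rewrite -tens11 bm_tens. Qed.

Definition amap (f : R -> 'M[C]_(p * q)) := am (f 0).
Definition bmap (f : R -> 'M[C]_(p * q)) := bm (f 1).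

Lemma dd0 f : dimdrop p q f -> f 0 = amap f *t 1%:M.
Proof. by move=> [_ [_ [[a ha] _]]]; rewrite /amap ha am_tens. Qed.
Lemma dd1 f : dimdrop p q f -> f 1 = 1%:M *t bmap f.
Proof. by move=> [_ [_ [_ [b hb]]]]; rewrite /bmap hb bm_tens. Qed.

Definition rAA (f : R -> 'M[C]_(p * q)) s := Upath p s *m (amap f *t 1%:M) *m adj (Upath p s).
Definition rBB (f : R -> 'M[C]_(p * q)) s := Upath q s *m (bmap f *t 1%:M) *m adj (Upath q s).

Definition Phi (f : R -> 'M[C]_(p * q)) s : 'M[C]_(P0 * P1) :=
  fam EAB (f s) + fam EBA (f (1 - s)) + fam EAA (rAA f s) + fam EBB (rBB f s).


Lemma amapD f g : amap (fun t => f t + g t) = amap f + amap g.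
Proof. exact: amD. Qed.
Lemma bmapD f g : bmap (fun t => f t + g t) = bmap f + bmap g.
Proof. exact: bmD. Qed.
Lemma amapZ c f : amap (fun t => c *: f t) = c *: amap f.
Proof. exact: amZ. Qed.
Lemma bmapZ c f : bmap (fun t => c *: f t) = c *: bmap f.
Proof. exact: bmZ. Qed.
Lemma amap_adj f : amap (adjf f) = adj (amap f).
Proof. exact: am_adj. Qed.
Lemma bmap_adj f : bmap (adjf f) = adj (bmap f).
Proof. exact: bm_adj. Qed.
Lemma amapM f g : dimdrop p q f -> dimdrop p q g ->
  amap (fun t => f t *m g t) = amap f *m amap g.
Proof.
move=> hf hg; set a := amap f; set b := amap g.
by rewrite /amap /= (dd0 hf) (dd0 hg) tensmx_mul mulmx1 am_tens.
Qed.
Lemma bmapM f g : dimdrop p q f -> dimdrop p q g ->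
  bmap (fun t => f t *m g t) = bmap f *m bmap g.
Proof.
move=> hf hg; set a := bmap f; set b := bmap g.
by rewrite /bmap /= (dd1 hf) (dd1 hg) tensmx_mul mulmx1 bm_tens.
Qed.

Lemma rAAD f g s : rAA (fun t => f t + g t) s = rAA f s + rAA g s.
Proof. by rewrite /rAA amapD tensmxDl mulmxDr mulmxDl. Qed.
Lemma rBBD f g s : rBB (fun t => f t + g t) s = rBB f s + rBB g s.
Proof. by rewrite /rBB bmapD tensmxDl mulmxDr mulmxDl. Qed.
Lemma rAAZ c f s : rAA (fun t => c *: f t) s = c *: rAA f s.
Proof. by rewrite /rAA amapZ tensmxZl -scalemxAr -scalemxAl. Qed.
Lemma rBBZ c f s : rBB (fun t => c *: f t) s = c *: rBB f s.
Proof. by rewrite /rBB bmapZ tensmxZl -scalemxAr -scalemxAl. Qed.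
Lemma rAA_adj f s : rAA (adjf f) s = adj (rAA f s).
Proof. by rewrite /rAA amap_adj !adjM adjK adj_tens adj1 mulmxA. Qed.
Lemma rBB_adj f s : rBB (adjf f) s = adj (rBB f s).
Proof. by rewrite /rBB bmap_adj !adjM adjK adj_tens adj1 mulmxA. Qed.
Lemma rAAM f g s : dimdrop p q f -> dimdrop p q g ->
  rAA (fun t => f t *m g t) s = rAA f s *m rAA g s.
Proof.
by move=> hf hg; rewrite /rAA amapM // conjU_mul ?Upath_unit' // tensmx_mul mulmx1.
Qed.
Lemma rBBM f g s : dimdrop p q f -> dimdrop p q g ->
  rBB (fun t => f t *m g t) s = rBB f s *m rBB g s.
Proof.
by move=> hf hg; rewrite /rBB bmapM // conjU_mul ?Upath_unit' // tensmx_mul mulmx1.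
Qed.
Lemma rAA1 s : rAA (fun _ => 1%:M) s = 1%:M.
Proof. by rewrite /rAA /amap am1 tens11 mulmx1 Upath_unit. Qed.
Lemma rBB1 s : rBB (fun _ => 1%:M) s = 1%:M.
Proof. by rewrite /rBB /bmap bm1 tens11 mulmx1 Upath_unit. Qed.

Lemma PhiD f g s : Phi (fun t => f t + g t) s = Phi f s + Phi g s.
Proof. by rewrite /Phi /= rAAD rBBD !fam_add addACA4. Qed.

Lemma PhiZ c f s : Phi (fun t => c *: f t) s = c *: Phi f s.
Proof. by rewrite /Phi /= rAAZ rBBZ !fam_scale !scalerDr. Qed.

Lemma Phi_adj f s : Phi (adjf f) s = adj (Phi f s).
Proof. by rewrite /Phi rAA_adj rBB_adj !adjD !fam_adj. Qed.

Lemma PhiM f g s : dimdrop p q f -> dimdrop p q g ->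
  Phi (fun t => f t *m g t) s = Phi f s *m Phi g s.
Proof.
move=> hf hg; rewrite /Phi /= rAAM // rBBM //.
rewrite (sum4_mul (fam_cross (fun k l => xS2 (x12 k l)) _ _) (fam_cross x13 _ _) (fam_cross x14 _ _)
  (fam_cross (fun k l => xS1 (x21 k l)) _ _) (fam_cross (fun k l => xS1 (x23 k l)) _ _)
  (fam_cross (fun k l => xS1 (x24 k l)) _ _)
  (fam_cross x31 _ _) (fam_cross (fun k l => xS2 (x32 k l)) _ _) (fam_cross x34 _ _)
  (fam_cross x41 _ _) (fam_cross (fun k l => xS2 (x42 k l)) _ _) (fam_cross x43 _ _)).
rewrite !fam_mul //; first [exact: oAB | exact: oBA | exact: oAA | exact: oBB | idtac].
all: first [exact: oAB | exact: oBA | exact: oAA | exact: oBB].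
Qed.

Definition PA0 := \sum_i blk (JA0 i) 1%:M.
Definition PB0 := \sum_i blk (JB0 i) 1%:M.
Definition PB1 := \sum_i blk (JB1 i) 1%:M.
Definition PA1 := \sum_i blk (JA1 i) 1%:M.

Lemma blk1 N n (J : 'M[C]_(N, n)) : blk J 1%:M = J *m adj J.
Proof. by rewrite /blk mulmx1. Qed.

Lemma P0sum : PA0 + PB0 = 1%:M.
Proof.
rewrite (_ : PA0 = \sum_(i < u) Jsel P0 p (0 + i * p) *m adj (Jsel P0 p (0 + i * p))); last by apply: eq_bigr => i _; rewrite blk1.
rewrite (_ : PB0 = \sum_(i < v) Jsel P0 q (u * p + i * q) *m adj (Jsel P0 q (u * p + i * q))); last by apply: eq_bigr => i _; rewrite blk1.
apply/matrixP => r r'; rewrite mxE.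
rewrite JJsum JJsum mxE.
case: (r == r') => //=; last by rewrite addr0.
have := ltn_ord r; rewrite {2}e0 => hr.
case: (ltnP r (u * p)) => h /=; first by rewrite addr0.
by rewrite hr add0r.
Qed.

Lemma P1sum : PB1 + PA1 = 1%:M.
Proof.
rewrite (_ : PA1 = \sum_(i < z) Jsel P1 p (w * q + i * p) *m adj (Jsel P1 p (w * q + i * p))); last by apply: eq_bigr => i _; rewrite blk1.
rewrite (_ : PB1 = \sum_(i < w) Jsel P1 q (0 + i * q) *m adj (Jsel P1 q (0 + i * q))); last by apply: eq_bigr => i _; rewrite blk1.
apply/matrixP => r r'; rewrite mxE.
rewrite JJsum JJsum mxE.
case: (r == r') => //=; last by rewrite addr0.
have := ltn_ord r; rewrite {2}e1 => hr.
case: (ltnP r (w * q)) => h /=; first by rewrite addr0.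
by rewrite hr add0r.
Qed.

Lemma famAB X Y : fam EAB (X *t Y) = (\sum_i blk (JA0 i) X) *t (\sum_j blk (JB1 j) Y).
Proof. exact: fam_tens. Qed.
Lemma famBA' X Y : fam EBA' (X *t Y) = (\sum_i blk (JB0 i) X) *t (\sum_j blk (JA1 j) Y).
Proof. exact: fam_tens. Qed.
Lemma famAA X Y : fam EAA (X *t Y) = (\sum_i blk (JA0 i) X) *t (\sum_j blk (JA1 j) Y).
Proof. exact: fam_tens. Qed.
Lemma famBB X Y : fam EBB (X *t Y) = (\sum_i blk (JB0 i) X) *t (\sum_j blk (JB1 j) Y).
Proof. exact: fam_tens. Qed.
Lemma famBA Y : fam EBA Y = fam EBA' (swp p q *m Y *m adj (swp p q)).
Proof. exact: fam_mulr. Qed.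

Lemma Phi1 s : Phi (fun _ => 1%:M) s = 1%:M.
Proof.
rewrite /Phi rAA1 rBB1 famBA mulmx1 swp_unit.
rewrite -(@tens11 R p q) -(@tens11 R q p) -(@tens11 R p p) -(@tens11 R q q).
rewrite famAB famBA' famAA famBB -/PA0 -/PB0 -/PA1 -/PB1.
by rewrite tens4 P0sum P1sum tens11.
Qed.

Lemma rAA0 f : rAA f 0 = amap f *t 1%:M.
Proof. by rewrite /rAA Upath0 adj1 mul1mx mulmx1. Qed.
Lemma rBB0 f : rBB f 0 = bmap f *t 1%:M.
Proof. by rewrite /rBB Upath0 adj1 mul1mx mulmx1. Qed.
Lemma rAA1' f : rAA f 1 = 1%:M *t amap f.
Proof. by rewrite /rAA Upath1 swp_conj. Qed.
Lemma rBB1' f : rBB f 1 = 1%:M *t bmap f.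
Proof. by rewrite /rBB Upath1 swp_conj. Qed.

Lemma Phi_at0 f : dimdrop p q f ->
  Phi f 0 = ((\sum_i blk (JA0 i) (amap f)) + (\sum_j blk (JB0 j) (bmap f))) *t 1%:M.
Proof.
move=> hf; rewrite /Phi subr0 rAA0 rBB0 (dd0 hf) (dd1 hf) famBA swp_conj.
rewrite famAB famBA' famAA famBB -/PA1 -/PB1.
by rewrite tens4 P1sum.
Qed.

Lemma Phi_at1 f : dimdrop p q f ->
  Phi f 1 = 1%:M *t ((\sum_i blk (JB1 i) (bmap f)) + (\sum_j blk (JA1 j) (amap f))).
Proof.
move=> hf; rewrite /Phi subrr rAA1' rBB1' (dd0 hf) (dd1 hf) famBA swp_conj.
rewrite famAB famBA' famAA famBB -/PA0 -/PB0.
by rewrite tens4 P0sum.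
Qed.

Definition k0 : 'I_u * 'I_w := (Ordinal hu, Ordinal hw).

Lemma Phi_extract f s : adj (EAB k0) *m Phi f s *m EAB k0 = f s.
Proof.
rewrite /Phi !mulmxDr !mulmxDl (fam_extract oAB).
rewrite (fam_cross_extract (fun k l => xS2 (x12 k l))) (fam_cross_extract x13) (fam_cross_extract x14).
by rewrite !addr0.
Qed.

Lemma Phi_cont f : mxc f -> mxc (Phi f).
Proof.
move=> hf; rewrite /Phi.
apply: mxc_add; last by apply: mxc_fam; apply: mxc_mul; [apply: mxc_mul; [exact: Upath_cont | exact: mxc_cst] | apply: mxc_adj; exact: Upath_cont].
apply: mxc_add; last by apply: mxc_fam; apply: mxc_mul; [apply: mxc_mul; [exact: Upath_cont | exact: mxc_cst] | apply: mxc_adj; exact: Upath_cont].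
apply: mxc_add; first by apply: mxc_fam.
apply: mxc_fam; exact: (mxc_comp hf rc_1m).
Qed.

Lemma phi_exists : exists phi : (R -> 'M[C]_(p * q)) -> (R -> 'M[C]_(P0 * P1)),
  unital_inj_star_hom phi.
Proof.
exists (fun f t => Phi f (clamp01 t)).
split.
  move=> f hf; split; first by move=> t; rewrite clamp_idem.
  split.
    apply: cont_of_mxc; apply: mxc_comp; last exact: clamp_cont.
    by apply: Phi_cont; apply: mxc_of_cont; case: hf => _ [].
  split.
    by exists ((\sum_i blk (JA0 i) (amap f)) + (\sum_j blk (JB0 j) (bmap f))); rewrite clamp0 Phi_at0.
  by exists ((\sum_i blk (JB1 i) (bmap f)) + (\sum_j blk (JA1 j) (amap f))); rewrite clamp1 Phi_at1.
split.
  by move=> f g _ _; apply: funext => t; rewrite PhiD.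
split.
  by move=> c f _; apply: funext => t; rewrite PhiZ.
split.
  by move=> f g hf hg; apply: funext => t; rewrite PhiM.
split.
  by move=> f _; apply: funext => t; rewrite Phi_adj.
split.
  by apply: funext => t; rewrite Phi1.
move=> f g hf hg e; apply: funext => t.
have [hfc _] := hf; have [hgc _] := hg; rewrite hfc hgc.
have := congr1 (fun F => F t) e; rewrite /= => he.
by rewrite -(Phi_extract f) -(Phi_extract g) he.
Qed.

End Constr.
End Main.

Local Close Scope ring_scope.

Theorem lemma4p2 (R : realType) (p q P0 P1 : nat) :
  (0 < p)%N -> (0 < q)%N -> coprime p q ->
  (0 < P0)%N -> (0 < P1)%N -> coprime P0 P1 ->
  (2 * p * q <= minn P0 P1)%N ->
  exists phi : (R -> 'M[R[i]]_(p * q)) -> (R -> 'M[R[i]]_(P0 * P1)),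
    unital_inj_star_hom phi.
Proof.
move=> hp hq cpq _ _ _ hmin.
have h0 : (2 * p * q <= P0)%N by apply: leq_trans hmin (geq_minl _ _).
have h1 : (2 * q * p <= P1)%N.
  by rewrite -mulnA (mulnC q) mulnA; apply: leq_trans hmin (geq_minr _ _).
have [u [v [hu e0]]] := decomp hp hq cpq h0.
have [w [z [hw e1]]] := decomp hq hp (ltac:(by rewrite coprime_sym)) h1.
exact: (phi_exists R hp hq hu hw e0 e1).
Qed.
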